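(* For every $\alpha\in(0,1)$ there is a constant $D\ge 1$ with the following property. Let $Z$ be a bounded metric space and let $\mathcal C$ be a countable collection of closed subsets of $Z$, each of positive diameter, such that $\Delta(C_1,C_2)\ge D$ for all $C_1,C_2\in\mathcal C$ with $C_1\neq C_2$. Then for every pair of distinct points $z_1,z_2\in Z$, either $\{z_1,z_2\}\subseteq C$ for some $C\in\mathcal C$, or there is a function $u\in C^\alpha(Z)$ such that: (1) the restriction $u|_C$ is constant for every $C\in\mathcal C$; (2) if $C_1,C_2\in\mathcal C$ and $u(C_1)=u(C_2)$, then $C_1=C_2$; (3) $u(z_1)\neq u(z_2)$.
   Context: For nonempty subsets $C_1,C_2$ of positive diameter of a metric space, the relative distance is $\Delta(C_1,C_2)=\dfrac{\mathrm{dist}(C_1,C_2)}{\min(\mathrm{diam}\,C_1,\mathrm{diam}\,C_2)}$. $C^\alpha(Z)$ denotes the space of real-valued $\alpha$-Hölder continuous functions on $Z$, i.e. $u:Z\to\mathbb R$ with $|u(x)-u(y)|\le K\,d(x,y)^\alpha$ for some $K$ and all $x,y$. *)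

(* Defs.v *)
From HB Require Import structures.
From mathcomp Require Import all_boot all_order all_algebra.
From mathcomp Require Import all_classical all_reals all_analysis.
Set Implicit Arguments. Unset Strict Implicit. Unset Printing Implicit Defensive.
Import Order.TTheory GRing.Theory Num.Theory.
Local Open Scope classical_set_scope.
Local Open Scope ring_scope.

Section MetricDefs.
Variables (R : realType) (Z : Type) (d : Z -> Z -> R).

Definition is_metric : Prop :=
  (forall x y, 0 <= d x y) /\
  (forall x y, d x y = 0 <-> x = y) /\
  (forall x y, d x y = d y x) /\
  (forall x y z, d x z <= d x y + d y z).

Definition bounded_metric : Prop := exists M : R, forall x y, d x y <= M.

Definition mclosed (C : set Z) : Prop :=
  forall x, (forall e : R, 0 < e -> exists y, C y /\ d x y < e) -> C x.

Definition diam (C : set Z) : R :=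
  sup [set r | exists x y, C x /\ C y /\ r = d x y].

Definition setdist (C1 C2 : set Z) : R :=
  inf [set r | exists x y, C1 x /\ C2 y /\ r = d x y].

Definition reldist (C1 C2 : set Z) : R :=
  setdist C1 C2 / Num.min (diam C1) (diam C2).

Definition holder (alpha : R) (u : Z -> R) : Prop :=
  exists K : R, forall x y, `|u x - u y| <= K * (d x y) `^ alpha.
End MetricDefs.

(* Main.v *)
Require Import Defs.
From HB Require Import structures.
From mathcomp Require Import all_boot all_order all_algebra.
From mathcomp Require Import all_classical all_reals all_analysis.
From mathcomp Require Import ring lra zify.
Import Order.TTheory GRing.Theory Num.Theory.
Local Open Scope classical_set_scope.
Local Open Scope ring_scope.
Section Pw.
Variable R : realType.

Lemma bern (a s : R) : 0 < a < 1 -> 0 <= s -> (1 + s) `^ a <= 1 + a * s.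
Proof.
move=> /andP[a0 a1] s0.
have p0 : 0 < a^-1 by rewrite invr_gt0.
have q0 : 0 < (1 - a)^-1 by rewrite invr_gt0 subr_gt0.
have := @conjugate_powR R ((1+s) `^ a) 1 (a^-1) ((1-a)^-1) (powR_ge0 _ _) ler01 p0 q0.
move=> /(_ ltac:(by rewrite !invrK addrC subrK)).
rewrite -powRrM divff ?gt_eqF // powRr1 ?addr_ge0 // powR1 mulr1 !invrK.
move=> h; apply: (le_trans h); rewrite mulrDl mul1r; lra.
Qed.

Lemma keyK (al a b c : R) : 0 < al < 1 -> 0 <= b -> b <= a -> 0 <= c -> al * c <= 1 ->
  (a + c * b) `^ al <= a `^ al + b `^ al.
Proof.
move=> /andP[al0 al1] b0 ba c0 alc.
have [a0|a0] := eqVneq a 0.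
  have b00 : b = 0 by apply/le_anti; rewrite b0 -a0 ba.
  by rewrite a0 b00 mulr0 addr0 powR0 ?gt_eqF // add0r.
have ap : 0 < a by rewrite lt_neqAle eq_sym a0 (le_trans b0 ba).
have [t [t0 [t1 ->]]] : exists t : R, 0 <= t /\ t <= 1 /\ b = a * t.
  exists (b / a); split; first by rewrite divr_ge0 // ltW.
  split; first by rewrite ler_pdivrMr // mul1r.
  by field.
have a0' : 0 <= a by exact: ltW.
rewrite mulrCA -{1}[a]mulr1 -mulrDr !powRM ?addr_ge0 ?mulr_ge0 //.
apply: (@le_trans _ _ (a `^ al * (1 + t `^ al))); last by rewrite mulrDr mulr1.
rewrite ler_pM2l ?powR_gt0 //.
have h1 : 0 < al < 1 by rewrite al0 al1.
have hb := @bern al (c * t) h1 (mulr_ge0 c0 t0).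
apply: (le_trans hb).
have [->|tp] := eqVneq t 0.
  by rewrite !mulr0 addr0 powR0 ?gt_eqF // addr0 lexx.
have tpos : 0 < t by rewrite lt_neqAle eq_sym tp t0.
apply: (@le_trans _ _ (1 + t)).
  by rewrite lerD2l mulrA ler_piMl.
by rewrite lerD2l ger1_powR ?tpos ?t1 // ltW.
Qed.

Lemma subadd (al x y : R) : 0 < al < 1 -> 0 <= x -> 0 <= y -> (x + y) `^ al <= x `^ al + y `^ al.
Proof.
move=> h x0 y0; have al1 : al * 1 <= 1 by rewrite mulr1 ltW // (andP h).2.
case: (leP y x) => yx.
  by have := @keyK al x y 1 h y0 yx ler01 al1; rewrite mul1r.
by have := @keyK al y x 1 h x0 (ltW yx) ler01 al1; rewrite mul1r addrC [in X in _ <= X]addrC.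
Qed.

Lemma powR_mono (al x y : R) : 0 <= al -> 0 <= x -> x <= y -> x `^ al <= y `^ al.
Proof.
move=> a0 x0 xy; apply: (ge0_ler_powR a0) => //; rewrite nnegrE //; exact: le_trans xy.
Qed.
End Pw.


Set Implicit Arguments. Unset Strict Implicit.
Section Main.
Variables (R : realType) (al : R).
Hypothesis hal : 0 < al < 1.
Variables (Z : Type) (d : Z -> Z -> R).
Hypothesis hd : is_metric d.
Variable M : R.
Hypothesis hM : forall x y, d x y <= M.
Variable Cc : set (set Z).
Hypothesis hC : forall C, Cc C -> mclosed d C /\ 0 < diam d C.
Variable D : R.
Hypothesis hD1 : 1 <= D.
Hypothesis hDal : al * (1 + D^-1) <= 1.
Hypothesis hsep : forall C1 C2, Cc C1 -> Cc C2 -> C1 <> C2 -> D <= reldist d C1 C2.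

Lemma al0 : 0 < al. Proof. by case/andP: hal. Qed.
Lemma al0' : 0 <= al. Proof. exact: ltW al0. Qed.
Lemma d0 x y : 0 <= d x y. Proof. by case: hd. Qed.
Lemma dxx x : d x x = 0. Proof. case: hd => _ [h _]; exact: (proj2 (h x x) erefl). Qed.
Lemma deq x y : d x y = 0 -> x = y. Proof. case: hd => _ [h _]; exact: (proj1 (h x y)). Qed.
Lemma dsym x y : d x y = d y x. Proof. by case: hd => _ [_ []]. Qed.
Lemma dtri x y z : d x z <= d x y + d y z. Proof. by case: hd => _ [_ [_]]. Qed.
Lemma D0 : 0 < D. Proof. exact: lt_le_trans ltr01 hD1. Qed.
Lemma pw0 : 0 `^ al = 0. Proof. by rewrite powR0 // gt_eqF // al0. Qed.

Lemma diam_ub (C : set Z) p q : C p -> C q -> d p q <= diam d C.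
Proof.
move=> Cp Cq; rewrite /diam.
have hub : has_ubound [set r | exists x y, C x /\ C y /\ r = d x y].
  by exists M => r /= [x [y [_ [_ ->]]]]; exact: hM.
by apply: (ub_le_sup hub); exists p, q.
Qed.

Lemma sdist C1 C2 p q : Cc C1 -> Cc C2 -> C1 <> C2 -> C1 p -> C2 q ->
  D * Num.min (diam d C1) (diam d C2) <= d p q.
Proof.
move=> c1 c2 ne p1 q2.
have m0 : 0 < Num.min (diam d C1) (diam d C2) by rewrite lt_min (hC c1).2 (hC c2).2.
have := hsep c1 c2 ne; rewrite /reldist ler_pdivlMr // => h.
apply: (le_trans h); rewrite /setdist.
have hlb : has_lbound [set r | exists x y, C1 x /\ C2 y /\ r = d x y].
  by exists 0 => r /= [x [y [_ [_ ->]]]]; exact: d0.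
by apply: (ge_inf hlb); exists p, q.
Qed.

Lemma sdist1 C A p q : Cc C -> Cc A -> C <> A -> diam d C <= diam d A -> C p -> A q ->
  D * diam d C <= d p q.
Proof.
move=> cC cA ne le Cp Aq; have := sdist cC cA ne Cp Aq.
by rewrite (@min_l _ _ (diam d C)).
Qed.

Definition trip := (set Z * Z * Z)%type.
Definition tset (t : trip) := t.1.1.
Definition tin (t : trip) := t.1.2.
Definition tout (t : trip) := t.2.
Definition wf (t : trip) := Cc (tset t) /\ tset t (tin t) /\ tset t (tout t).

Fixpoint cost (x : Z) (ts : seq trip) (y : Z) : R :=
  if ts is t :: ts' then d x (tin t) `^ al + cost (tout t) ts' y else d x y `^ al.

Lemma cost_ge0 x ts y : 0 <= cost x ts y.
Proof. elim: ts x => [|t ts IH] x /=; [exact: powR_ge0|by rewrite addr_ge0 ?powR_ge0]. Qed.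

Lemma cost_cat x ts1 t ts2 y :
  cost x (ts1 ++ t :: ts2) y = cost x ts1 (tin t) + cost (tout t) ts2 y.
Proof. by elim: ts1 x => [|a ts1 IH] x //=; rewrite IH addrA. Qed.

Lemma In_cat (u : trip) s1 s2 : List.In u (s1 ++ s2) <-> List.In u s1 \/ List.In u s2.
Proof.
elim: s1 => [|a s1 IH] /=; first by split; [right|case].
rewrite IH; tauto.
Qed.

Lemma split_first (P : trip -> Prop) ts : (exists t, List.In t ts /\ P t) ->
  exists ts1 t ts2, ts = ts1 ++ t :: ts2 /\ P t /\ (forall u, List.In u ts1 -> ~ P u).
Proof.
elim: ts => [[t [[]]]|a ts IH [t [ht Pt]]] //.
have [Pa|nPa] := pselect (P a).
  by exists [::], a, ts; split=> //.
case: ht => [eat|hin]; first by subst; contradiction.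
have [ts1 [b [ts2 [-> [Pb h]]]]] := IH (ex_intro _ t (conj hin Pt)).
exists (a :: ts1), b, ts2; split=> //; split=> // u [<-|]; [exact: nPa| exact: h].
Qed.

Lemma split_last (P : trip -> Prop) ts : (exists t, List.In t ts /\ P t) ->
  exists ts1 t ts2, ts = ts1 ++ t :: ts2 /\ P t /\ (forall u, List.In u ts2 -> ~ P u).
Proof.
elim: ts => [[t [[]]]|a ts IH [t [ht Pt]]] //.
have [[t' [h' P']]|nex] := pselect (exists t, List.In t ts /\ P t).
  have [ts1 [b [ts2 [-> [Pb h]]]]] := IH (ex_intro _ t' (conj h' P')).
  by exists (a :: ts1), b, ts2.
exists [::], a, ts; split=> //; split.
  case: ht => [->//|hin]; exfalso; apply: nex; by exists t.
by move=> u hu Pu; apply: nex; exists u.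
Qed.

Lemma max_trip (ts : seq trip) : ts <> [::] -> exists t, List.In t ts /\
  forall u, List.In u ts -> diam d (tset u) <= diam d (tset t).
Proof.
elim: ts => [//|a ts IH _].
case: ts IH => [|b ts] IH.
  by exists a; split; [left|move=> u [<-|[]]].
have [t [ht hm]] := IH ltac:(by []).
case: (leP (diam d (tset a)) (diam d (tset t))) => h.
  exists t; split; first by right.
  by move=> u [<-|hu] //; exact: hm.
exists a; split; first by left.
move=> u [<-|hu] //; exact: le_trans (hm u hu) (ltW h).
Qed.

Lemma decomp x y ts : ts <> [::] -> (forall u, List.In u ts -> wf u) ->
  exists C p q ts1 ts2, Cc C /\ C p /\ C q /\
   (exists t0, List.In t0 ts /\ tset t0 = C) /\
   (forall u, List.In u ts -> diam d (tset u) <= diam d C) /\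
   (forall u, List.In u ts1 -> List.In u ts /\ tset u <> C) /\
   (forall u, List.In u ts2 -> List.In u ts /\ tset u <> C) /\
   (size ts1 < size ts)%N /\ (size ts2 < size ts)%N /\
   cost x ts1 p + cost q ts2 y <= cost x ts y.
Proof.
move=> ne hwf; have [t0 [ht0 hmax]] := max_trip ne.
pose C := tset t0.
have [ts1 [a [rest [E [Pa h1]]]]] := split_first (ex_intro (fun t => List.In t ts /\ tset t = C) t0 (conj ht0 erefl)).
have ina : List.In a ts by rewrite E; apply/In_cat; right; left.
have [wa1 [wa2 wa3]] := hwf a ina.
have inl1 u : List.In u ts1 -> List.In u ts by move=> hu; rewrite E; apply/In_cat; left.
have inr1 u : List.In u rest -> List.In u ts by move=> hu; rewrite E; apply/In_cat; right; right.
have [[t' [h' P']]|nex] := pselect (exists t, List.In t rest /\ tset t = C).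
  have [mid [b [ts2 [E2 [Pb h2]]]]] := split_last (ex_intro (fun t => List.In t rest /\ tset t = C) t' (conj h' P')).
  have inb : List.In b ts by apply: inr1; rewrite E2; apply/In_cat; right; left.
  have [wb1 [wb2 wb3]] := hwf b inb.
  exists C, (tin a), (tout b), ts1, ts2.
  split; first by rewrite -Pa.
  split; first by rewrite -Pa.
  split; first by rewrite -Pb.
  split; first by exists t0.
  split; first exact: hmax.
  split; first by move=> u hu; split; [exact: inl1|exact: h1].
  split.
    move=> u hu; split; last exact: h2.
    by apply: inr1; rewrite E2; apply/In_cat; right; right.
  rewrite E E2 !size_cat /=.
  rewrite size_cat /=.
  split; first lia.
  split; first lia.
  rewrite cost_cat cost_cat lerD2l lerDr; exact: cost_ge0.
exists C, (tin a), (tout a), ts1, rest.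
split; first by rewrite -Pa.
split; first by rewrite -Pa.
split; first by rewrite -Pa.
split; first by exists t0.
split; first exact: hmax.
split; first by move=> u hu; split; [exact: inl1|exact: h1].
split; first by move=> u hu; split; [exact: inr1|move=> Pu; apply: nex; exists u].
rewrite E !size_cat /=.
split; first lia.
split; first lia.
by rewrite cost_cat.
Qed.

Lemma Dn0 : D != 0. Proof. by rewrite gt_eqF // D0. Qed.

Lemma divD x y : D * x <= y -> x <= D^-1 * y.
Proof.
move=> h; rewrite -[x](mulKf Dn0) ler_wpM2l // invr_ge0 ltW //; exact: D0.
Qed.

Definition lam := 1 + D^-1.
Lemma lam1 : 1 <= lam. Proof. by rewrite /lam lerDl invr_ge0 ltW // D0. Qed.
Lemma lam0 : 0 < lam. Proof. exact: lt_le_trans ltr01 lam1. Qed.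
Lemma lamn0 : lam != 0. Proof. by rewrite gt_eqF // lam0. Qed.

Lemma valley a b dl : 0 <= a -> 0 <= b -> 0 <= dl -> D * dl <= a -> D * dl <= b ->
  (a + b + dl) `^ al <= a `^ al + b `^ al.
Proof.
move=> a0 b0 l0 ha hb.
have la := divD ha; have lb := divD hb.
have lam0' : 0 <= lam by exact: ltW lam0.
case: (leP b a) => ba.
  apply: le_trans (@keyK R al a b lam hal b0 ba lam0' hDal).
  apply: powR_mono; first exact: al0'.
    by rewrite !addr_ge0.
  rewrite /lam mulrDl mul1r; set e := D^-1 * b in lb *; lra.
rewrite [X in _ <= X]addrC.
apply: le_trans (@keyK R al b a lam hal a0 (ltW ba) lam0' hDal).
apply: powR_mono; first exact: al0'.
  by rewrite !addr_ge0.
rewrite /lam mulrDl mul1r; set e := D^-1 * a in la *; lra.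
Qed.

Lemma seg n : forall ts s t A B, (size ts <= n)%N -> Cc A -> Cc B -> A s -> B t ->
  (forall u, List.In u ts -> wf u /\ tset u <> A /\ tset u <> B /\
      diam d (tset u) <= diam d A /\ diam d (tset u) <= diam d B) ->
  d s t `^ al <= cost s ts t.
Proof.
elim: n => [|n IH] ts s t A B hs cA cB As Bt hu.
  by case: ts hs hu => //= _ _; rewrite lexx.
case: ts hs hu => [|t1 ts'] hs hu; first by rewrite /= lexx.
have [C [p [q [ts1 [ts2 [cC [Cp [Cq [[t0 [ht0 et0]] [hmax [h1 [h2 [s1 [s2 hc]]]]]]]]]]]]]]
  := @decomp s t (t1 :: ts') ltac:(by []) (fun u hu' => (hu u hu').1).
have [_ [neA [neB [leA leB]]]] := hu t0 ht0; rewrite et0 in neA neB leA leB.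
have H1 : d s p `^ al <= cost s ts1 p.
  apply: (IH ts1 s p A C) => //; first by rewrite -ltnS (leq_trans s1 hs).
  move=> u hu1; have [hin hne] := h1 u hu1; have [w [nA [nB [lA lB]]]] := hu u hin.
  by do !split => //; exact: hmax.
have H2 : d q t `^ al <= cost q ts2 t.
  apply: (IH ts2 q t C B) => //; first by rewrite -ltnS (leq_trans s2 hs).
  move=> u hu1; have [hin hne] := h2 u hu1; have [w [nA [nB [lA lB]]]] := hu u hin.
  by do !split => //; exact: hmax.
have ha : D * diam d C <= d s p by rewrite dsym; exact: sdist1 cC cA neA leA Cp As.
have hb : D * diam d C <= d q t by exact: sdist1 cC cB neB leB Cq Bt.
have hdel : 0 <= diam d C by exact: ltW (hC cC).2.
apply: le_trans hc.
apply: le_trans (lerD H1 H2).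
apply: le_trans (valley (d0 _ _) (d0 _ _) hdel ha hb).
apply: powR_mono; [exact: al0'|exact: d0|].
have := dtri s p t; have := dtri p q t; have := diam_ub Cp Cq; lra.
Qed.

Lemma divlam_le x : 0 <= x -> x / lam <= x.
Proof. by move=> x0; rewrite ler_pdivrMr ?lam0 // ler_peMr // lam1. Qed.

Lemma lft n : forall ts x t B, (size ts <= n)%N -> Cc B -> B t ->
  (forall u, List.In u ts -> wf u /\ tset u <> B /\ diam d (tset u) <= diam d B) ->
  (d x t / lam) `^ al <= cost x ts t.
Proof.
elim: n => [|n IH] ts x t B hs cB Bt hu.
  case: ts hs hu => //= _ _; apply: powR_mono; [exact: al0'| |exact: divlam_le (d0 _ _)].
  by rewrite divr_ge0 ?d0 // ltW // lam0.
case: ts hs hu => [|t1 ts'] hs hu.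
  rewrite /=; apply: powR_mono; [exact: al0'| |exact: divlam_le (d0 _ _)].
  by rewrite divr_ge0 ?d0 // ltW // lam0.
have [C [p [q [ts1 [ts2 [cC [Cp [Cq [[t0 [ht0 et0]] [hmax [h1 [h2 [s1 [s2 hc]]]]]]]]]]]]]]
  := @decomp x t (t1 :: ts') ltac:(by []) (fun u hu' => (hu u hu').1).
have [_ [neB leB]] := hu t0 ht0; rewrite et0 in neB leB.
have H1 : (d x p / lam) `^ al <= cost x ts1 p.
  apply: (IH ts1 x p C) => //; first by rewrite -ltnS (leq_trans s1 hs).
  move=> u hu1; have [hin hne] := h1 u hu1; have [w [nB lB]] := hu u hin.
  by do !split => //; exact: hmax.
have H2 : d q t `^ al <= cost q ts2 t.
  apply: (@seg (size ts2) ts2 q t C B) => //.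
  move=> u hu1; have [hin hne] := h2 u hu1; have [w [nB lB]] := hu u hin.
  by do !split => //; exact: hmax.
have hb : D * diam d C <= d q t by exact: sdist1 cC cB neB leB Cq Bt.
have lb := divD hb.
have hdel : 0 <= diam d C by exact: ltW (hC cC).2.
apply: le_trans hc.
apply: le_trans (lerD H1 H2).
have l0 : 0 <= d x p / lam by rewrite divr_ge0 ?d0 // ltW // lam0.
apply: le_trans (@subadd R al _ _ hal l0 (d0 _ _)).
apply: powR_mono; [exact: al0'|by rewrite divr_ge0 ?d0 // ltW // lam0|].
have e : (d x p + lam * d q t) / lam = d x p / lam + d q t.
  by field; exact: lamn0.
rewrite -e ler_pM2r ?invr_gt0 ?lam0 //.
have := dtri x p t; have := dtri p q t; have := diam_ub Cp Cq.
rewrite /lam mulrDl mul1r; set e1 := D^-1 * d q t in lb *; lra.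
Qed.

Lemma rgt n : forall ts s y A, (size ts <= n)%N -> Cc A -> A s ->
  (forall u, List.In u ts -> wf u /\ tset u <> A /\ diam d (tset u) <= diam d A) ->
  (d s y / lam) `^ al <= cost s ts y.
Proof.
elim: n => [|n IH] ts s y A hs cA As hu.
  case: ts hs hu => //= _ _; apply: powR_mono; [exact: al0'| |exact: divlam_le (d0 _ _)].
  by rewrite divr_ge0 ?d0 // ltW // lam0.
case: ts hs hu => [|t1 ts'] hs hu.
  rewrite /=; apply: powR_mono; [exact: al0'| |exact: divlam_le (d0 _ _)].
  by rewrite divr_ge0 ?d0 // ltW // lam0.
have [C [p [q [ts1 [ts2 [cC [Cp [Cq [[t0 [ht0 et0]] [hmax [h1 [h2 [s1 [s2 hc]]]]]]]]]]]]]]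
  := @decomp s y (t1 :: ts') ltac:(by []) (fun u hu' => (hu u hu').1).
have [_ [neA leA]] := hu t0 ht0; rewrite et0 in neA leA.
have H2 : (d q y / lam) `^ al <= cost q ts2 y.
  apply: (IH ts2 q y C) => //; first by rewrite -ltnS (leq_trans s2 hs).
  move=> u hu1; have [hin hne] := h2 u hu1; have [w [nA lA]] := hu u hin.
  by do !split => //; exact: hmax.
have H1 : d s p `^ al <= cost s ts1 p.
  apply: (@seg (size ts1) ts1 s p A C) => //.
  move=> u hu1; have [hin hne] := h1 u hu1; have [w [nA lA]] := hu u hin.
  by do !split => //; exact: hmax.
have ha : D * diam d C <= d s p by rewrite dsym; exact: sdist1 cC cA neA leA Cp As.
have la := divD ha.
apply: le_trans hc.
apply: le_trans (lerD H1 H2).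
have l0 : 0 <= d q y / lam by rewrite divr_ge0 ?d0 // ltW // lam0.
apply: le_trans (@subadd R al _ _ hal (d0 _ _) l0).
apply: powR_mono; [exact: al0'|by rewrite divr_ge0 ?d0 // ltW // lam0|].
have e : (lam * d s p + d q y) / lam = d s p + d q y / lam.
  by field; exact: lamn0.
rewrite -e ler_pM2r ?invr_gt0 ?lam0 //.
have := dtri s p y; have := dtri p q y; have := diam_ub Cp Cq.
rewrite /lam mulrDl mul1r; set e1 := D^-1 * d s p in la *; lra.
Qed.

Lemma theta x r : 0 < r -> exists th, 0 < th /\ forall C c, Cc C -> r <= diam d C ->
  ~ C x -> C c -> th <= d x c.
Proof.
move=> r0.
have Dr0 : 0 < D * r / 2 by rewrite divr_gt0 // mulr_gt0 // D0.
have [[C0 [c0 [cC0 [rC0 [nC0 [C0c0 dlt]]]]]]|nex] :=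
  pselect (exists C0 c0, Cc C0 /\ r <= diam d C0 /\ ~ C0 x /\ C0 c0 /\ d x c0 < D * r / 2).
  have [e0 [e0p he0]] : exists e0, 0 < e0 /\ forall y, C0 y -> e0 <= d x y.
    apply: contrapT => hne; apply: nC0; apply: (hC cC0).1 => e ep.
    apply: contrapT => hne2; apply: hne; exists e; split => // y Cy.
    rewrite leNgt; apply/negP => hlt; apply: hne2; exists y; split => //.
  exists (Num.min e0 (D * r / 2)); split; first by rewrite lt_min e0p Dr0.
  move=> C c cC rC nCx Cc'.
  have [eC|neC] := pselect (C = C0).
    by rewrite ge_min he0 // -eC.
  have h := sdist cC cC0 neC Cc' C0c0.
  have hm : r <= Num.min (diam d C) (diam d C0) by rewrite le_min rC rC0.
  have hDm : D * r <= D * Num.min (diam d C) (diam d C0) by rewrite ler_wpM2l // ltW // D0.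
  have := dtri c x c0; rewrite (dsym c x) => ht.
  rewrite ge_min; apply/orP; right.
  have : D * r <= d x c + d x c0 by apply: le_trans hDm (le_trans h ht).
  move: dlt; set u := D * r; lra.
exists (D * r / 2); split => // C c cC rC nCx Cc'.
rewrite leNgt; apply/negP => h; apply: nex; exists C, c; tauto.
Qed.

Lemma pos x y : x <> y -> ~ (exists C, Cc C /\ C x /\ C y) ->
  exists eta, 0 < eta /\ forall ts, (forall u, List.In u ts -> wf u) -> eta <= cost x ts y.
Proof.
move=> nxy nC.
have dxy0 : 0 < d x y.
  rewrite lt_neqAle d0 andbT eq_sym; apply/negP => /eqP /deq; exact: nxy.
pose r := d x y / 2.
have r0 : 0 < r by rewrite divr_gt0.
have [thx [thx0 hthx]] := theta x r0.
have [thy [thy0 hthy]] := theta y r0.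
pose mu := Num.min (Num.min thx thy) (r / 2).
have mu0 : 0 < mu by rewrite !lt_min thx0 thy0 divr_gt0.
have mux : mu <= thx by rewrite !ge_min lexx.
have muy : mu <= thy by rewrite !ge_min lexx orbT.
have mur : mu <= r / 2 by rewrite ge_min lexx orbT.
have mul0 : 0 <= mu / lam by rewrite divr_ge0 // ltW // ?lam0.
exists (Num.min (d x y `^ al) ((mu / lam) `^ al)); split.
  by rewrite lt_min !powR_gt0 // divr_gt0 // lam0.
case=> [|t1 ts'] hwf; first by rewrite /= ge_min lexx.
have [C [p [q [ts1 [ts2 [cC [Cp [Cq [[t0 [ht0 et0]] [hmax [h1 [h2 [s1 [s2 hc]]]]]]]]]]]]]]
  := @decomp x y (t1 :: ts') ltac:(by []) hwf.
have H1 : (d x p / lam) `^ al <= cost x ts1 p.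
  apply: (@lft (size ts1) ts1 x p C) => //.
  move=> u hu1; have [hin hne] := h1 u hu1.
  split; first exact: hwf.
  by split => //; exact: hmax.
have H2 : (d q y / lam) `^ al <= cost q ts2 y.
  apply: (@rgt (size ts2) ts2 q y C) => //.
  move=> u hu1; have [hin hne] := h2 u hu1.
  split; first exact: hwf.
  by split => //; exact: hmax.
have c10 := cost_ge0 x ts1 p; have c20 := cost_ge0 q ts2 y.
have mono z : mu <= z -> (mu / lam) `^ al <= (z / lam) `^ al.
  move=> hz; apply: powR_mono => //; first exact: al0'.
  by rewrite ler_pM2r ?invr_gt0 ?lam0.
case: (leP mu (d x p)) => hp.
  rewrite ge_min; apply/orP; right; apply: le_trans (mono _ hp) _.
  apply: le_trans H1 _; apply: le_trans hc; lra.
case: (leP mu (d q y)) => hq.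
  rewrite ge_min; apply/orP; right; apply: le_trans (mono _ hq) _.
  apply: le_trans H2 _; apply: le_trans hc; lra.
have rC : r <= diam d C.
  have := dtri x p y; have := dtri p q y; have := diam_ub Cp Cq.
  have : d x y = 2 * r by rewrite /r; field.
  lra.
exfalso.
have [Cx|nCx] := pselect (C x); last first.
  have := hthx C p cC rC nCx Cp; lra.
have [Cy|nCy] := pselect (C y); last first.
  have := hthy C q cC rC nCy Cq; rewrite dsym; lra.
by apply: nC; exists C.
Qed.

Definition wfl (ts : seq trip) := forall u, List.In u ts -> wf u.
Definition rho x y := inf [set c | exists ts, wfl ts /\ c = cost x ts y].

Lemma rho_lb x y : has_lbound [set c | exists ts, wfl ts /\ c = cost x ts y].
Proof. by exists 0 => c /= [ts [_ ->]]; exact: cost_ge0. Qed.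

Lemma rho_ne x y : [set c | exists ts, wfl ts /\ c = cost x ts y] !=set0.
Proof. by exists (cost x [::] y), [::]; split => // u []. Qed.

Lemma rho_le x ts y : wfl ts -> rho x y <= cost x ts y.
Proof. by move=> h; apply: (ge_inf (rho_lb x y)); exists ts. Qed.

Lemma rho_ge0 x y : 0 <= rho x y.
Proof.
apply: lb_le_inf; first exact: rho_ne.
by move=> c /= [ts [_ ->]]; exact: cost_ge0.
Qed.

Lemma rho_ub x y : rho x y <= d x y `^ al.
Proof. by have := @rho_le x [::] y (fun u (h : List.In u [::]) => match h with end). Qed.

Lemma rho_xx x : rho x x = 0.
Proof. by apply/le_anti; rewrite rho_ge0 andbT; have := rho_ub x x; rewrite dxx pw0. Qed.

Lemma cost_last a ts x y : cost a ts y <= cost a ts x + d x y `^ al.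
Proof.
elim: ts a => [|t ts IH] a /=; last by rewrite -addrA lerD2l.
apply: le_trans (@subadd R al _ _ hal (d0 _ _) (d0 _ _)).
by apply: powR_mono; [exact: al0'|exact: d0|exact: dtri].
Qed.

Lemma rho_step a x y : rho a y <= rho a x + d x y `^ al.
Proof.
rewrite -lerBlDr; apply: lb_le_inf; first exact: rho_ne.
move=> c /= [ts [hw ->]]; rewrite lerBlDr.
exact: le_trans (@rho_le a ts y hw) (cost_last a ts x y).
Qed.

Lemma rho_same C a x y : Cc C -> C x -> C y -> rho a y <= rho a x.
Proof.
move=> cC Cx Cy; apply: lb_le_inf; first exact: rho_ne.
move=> c /= [ts [hw ->]].
have hw' : wfl (ts ++ [:: (C, x, y)]).
  move=> u /In_cat [hu|[<-|[]]]; first exact: hw.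
  by split.
apply: le_trans (@rho_le a _ y hw') _.
by rewrite (cost_cat a ts (C, x, y) [::] y) /= dxx pw0 addr0.
Qed.

Lemma rho_const C a x y : Cc C -> C x -> C y -> rho a x = rho a y.
Proof. by move=> cC Cx Cy; apply/le_anti; rewrite (@rho_same C a x y cC Cx Cy) (@rho_same C a y x cC Cy Cx). Qed.

Lemma rho_hold a x y : `|rho a x - rho a y| <= d x y `^ al.
Proof.
have h1 := rho_step a x y; have h2 := rho_step a y x; rewrite dsym in h2.
rewrite ler_norml; apply/andP; split; lra.
Qed.

Lemma rho_pos x y : x <> y -> ~ (exists C, Cc C /\ C x /\ C y) -> 0 < rho x y.
Proof.
move=> nxy nC; have [eta [eta0 h]] := pos nxy nC.
apply: lt_le_trans eta0 _; apply: lb_le_inf; first exact: rho_ne.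
by move=> c /= [ts [hw ->]]; exact: h.
Qed.

Lemma disj C1 C2 z : Cc C1 -> Cc C2 -> C1 z -> C2 z -> C1 = C2.
Proof.
move=> c1 c2 z1 z2; apply: contrapT => ne.
have := sdist c1 c2 ne z1 z2; rewrite dxx.
have m0 : 0 < Num.min (diam d C1) (diam d C2) by rewrite lt_min (hC c1).2 (hC c2).2.
have := mulr_gt0 D0 m0; lra.
Qed.

Section Weights.
Variable P : nat -> Z.

Definition Bd := M `^ al + 1.
Lemma M0 : 0 <= M. Proof. exact: le_trans (d0 (P 0) (P 0)) (hM _ _). Qed.
Lemma Bd0 : 0 < Bd. Proof. by rewrite /Bd ltr_wpDl ?powR_ge0. Qed.
Definition F n z := rho (P n) z.
Lemma F0 n z : 0 <= F n z. Proof. exact: rho_ge0. Qed.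
Lemma FB n z : F n z <= Bd.
Proof.
apply: le_trans (rho_ub _ _) _; apply: le_trans (_ : M `^ al <= Bd); last by rewrite /Bd lerDl.
by apply: powR_mono; [exact: al0'|exact: d0|exact: hM].
Qed.
Lemma Fdiff n a b : `|F n a - F n b| <= Bd.
Proof.
have := F0 n a; have := F0 n b; have := FB n a; have := FB n b.
rewrite ler_norml; move=> *; apply/andP; split; lra.
Qed.

Definition sep k l := P k <> P l /\ ~ (exists C, Cc C /\ C (P k) /\ C (P l)).

Definition Sf n (f : nat -> R) z := \sum_(j < n) f j * F j z.

Definition Good n f e v e' := 0 < v /\ 4 * Bd * v <= e /\ 0 < e' /\ e' <= e / 2 /\
  forall k, (k < n)%N -> sep k n ->
    3 * e' <= `|Sf n f (P k) - Sf n f (P n) + v * (F n (P k) - F n (P n))|.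

Definition pick n f e : R * R :=
  match pselect (exists ve : R * R, Good n f e ve.1 ve.2) with
  | left h => proj1_sig (cid h) | right _ => (0, 0) end.

Lemma pickP n f e : (exists v e', Good n f e v e') ->
  Good n f e (pick n f e).1 (pick n f e).2.
Proof.
move=> [v [e' h]]; rewrite /pick; case: pselect => [h'|nh].
  exact: (proj2_sig (cid h')).
by exfalso; apply: nh; exists (v, e').
Qed.

Fixpoint stt n : (nat -> R) * R :=
  if n is m.+1 then
    let s := stt m in let pe := pick m s.1 s.2 in
    (fun j => if j == m then pe.1 else s.1 j, pe.2)
  else (fun _ => 0, 1).

Definition w j := (stt j.+1).1 j.
Definition eps n := (stt n).2.

Lemma stt_w n j : (j < n)%N -> (stt n).1 j = w j.
Proof.
elim: n => [//|n IH] ltj /=.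
have [->|nj] := eqVneq j n; first by rewrite /w /= eqxx.
by apply: IH; rewrite ltn_neqAle nj -ltnS.
Qed.

Definition S n z := \sum_(j < n) w j * F j z.
Definition Wsum n := \sum_(j < n) w j.

Lemma Sf_stt n z : Sf n (stt n).1 z = S n z.
Proof. by apply: eq_bigr => j _; rewrite stt_w. Qed.
Lemma S_rec n z : S n.+1 z = S n z + w n * F n z.
Proof. by rewrite /S big_ord_recr. Qed.
Lemma W_rec n : Wsum n.+1 = Wsum n + w n.
Proof. by rewrite /Wsum big_ord_recr. Qed.
Lemma S0 z : S 0 z = 0. Proof. by rewrite /S big_ord0. Qed.
Lemma W0 : Wsum 0 = 0. Proof. by rewrite /Wsum big_ord0. Qed.

Definition Inv n := 0 < eps n /\ forall k l, (k < l)%N -> (l < n)%N -> sep k l ->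
  2 * eps n <= `|S n (P k) - S n (P l)|.

Lemma finmin n (Q : nat -> Prop) (g : nat -> R) :
  (forall k, (k < n)%N -> Q k -> 0 < g k) ->
  exists e, 0 < e /\ forall k, (k < n)%N -> Q k -> e <= g k.
Proof.
elim: n => [|n IH] h; first by exists 1; split => // k.
have [e [e0 he]] := IH (fun k hk => h k (leqW hk)).
have [Qn|nQn] := pselect (Q n).
  exists (Num.min e (g n)); split; first by rewrite lt_min e0 h.
  move=> k hk Qk; rewrite ge_min; apply/orP.
  have [->|kn] := eqVneq k n; first by right.
  by left; apply: he Qk; rewrite ltn_neqAle kn -ltnS.
exists e; split => // k hk Qk; have [ekn|kn] := eqVneq k n; first by subst.
by apply: he Qk; rewrite ltn_neqAle kn -ltnS.
Qed.

Lemma good_ex n : Inv n -> exists v e', Good n (stt n).1 (eps n) v e'.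
Proof.
move=> [ep hI].
set e := eps n in ep hI *.
pose c k := S n (P k) - S n (P n).
pose rk k := F n (P k) - F n (P n).
have hr k : sep k n -> 0 < rk k.
  move=> [ne nC]; rewrite /rk /F rho_xx subr0; apply: rho_pos.
    by move=> h; apply: ne.
  by move=> [C [cC [h1 h2]]]; apply: nC; exists C.
pose b k := - c k / rk k.
have [e0' [e0p he0]] := @finmin n (fun k => sep k n /\ 0 < b k) b (fun k _ h => h.2).
have m0 : 0 < Num.min (e / (4 * Bd)) e0'.
  by rewrite lt_min e0p divr_gt0 // mulr_gt0 // Bd0.
pose v := Num.min (e / (4 * Bd)) e0' / 2.
have v0 : 0 < v by rewrite divr_gt0.
have vm : v <= Num.min (e / (4 * Bd)) e0' / 2 by [].
have vm1 : Num.min (e / (4 * Bd)) e0' <= e / (4 * Bd) by rewrite ge_min lexx.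
have vm2 : Num.min (e / (4 * Bd)) e0' <= e0' by rewrite ge_min lexx orbT.
have v1 : 4 * Bd * v <= e.
  rewrite mulrC -ler_pdivlMr ?mulr_gt0 ?Bd0 //.
  move: vm vm1; set m := Num.min _ _; lra.
have hnz k : (k < n)%N -> sep k n -> c k + v * rk k != 0.
  move=> hk hs; apply/negP => /eqP h.
  have rk0 := hr k hs.
  have h' : v * rk k = - c k by lra.
  have vb : v = b k by rewrite /b -h' mulfK // gt_eqF.
  have bpos : 0 < b k by rewrite -vb.
  have := he0 k hk (conj hs bpos); rewrite -vb.
  move: vm vm2 v0; set m := Num.min _ _; lra.
have [e1 [e1p he1]] := @finmin n (fun k => sep k n) (fun k => `|c k + v * rk k|)
  (fun k hk hs => ltac:(by rewrite normr_gt0; exact: hnz k hk hs)).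
exists v, (Num.min (e / 2) (e1 / 3)).
split => //; split => //; split; first by rewrite lt_min !divr_gt0.
split; first by rewrite ge_min lexx.
move=> k hk hs; rewrite !Sf_stt.
have := he1 k hk hs; rewrite /c /rk.
have : Num.min (e / 2) (e1 / 3) <= e1 / 3 by rewrite ge_min lexx orbT.
set m := Num.min _ _; lra.
Qed.

Lemma good_n n : Inv n -> Good n (stt n).1 (eps n) (w n) (eps n.+1).
Proof. by move=> h; rewrite /w {2}/eps /= eqxx; exact: pickP (good_ex h). Qed.

Lemma norm_lb (a b : R) : `|a| - `|b| <= `|a + b|.
Proof. have := ler_normD (a + b) (- b); rewrite normrN addrK; lra. Qed.

Lemma inv_all n : Inv n.
Proof.
elim: n => [|n IH].
  by split; [rewrite /eps /= ltr01|move=> k l _].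
have [v0 [v1 [e'0 [e'1 hnew]]]] := good_n IH.
have [e0 hI] := IH.
split => // k l kl ln1 hs.
rewrite !S_rec.
rewrite ltnS leq_eqVlt in ln1; case/orP: ln1 => [/eqP el|ln].
  subst l; have := hnew k kl hs; rewrite !Sf_stt.
  have -> : S n (P k) + w n * F n (P k) - (S n (P n) + w n * F n (P n)) =
    S n (P k) - S n (P n) + w n * (F n (P k) - F n (P n)) by ring.
  lra.
have h1 := hI k l kl ln hs.
have -> : S n (P k) + w n * F n (P k) - (S n (P l) + w n * F n (P l)) =
    S n (P k) - S n (P l) + w n * (F n (P k) - F n (P l)) by ring.
have h2 := norm_lb (S n (P k) - S n (P l)) (w n * (F n (P k) - F n (P l))).
have h3 : `|w n * (F n (P k) - F n (P l))| <= w n * Bd.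
  by rewrite normrM (ger0_norm (ltW v0)) ler_pM2l // Fdiff.
have h4 : w n * Bd = (4 * Bd * w n) / 4 by field.
move: h1 h2 h3 h4 v1 e'1; set A := `|_|; set B := `|_|; set C := `|_|; set X := 4 * Bd * w n.
lra.
Qed.

Lemma eps_pos n : 0 < eps n. Proof. exact: (inv_all n).1. Qed.
Lemma w_pos n : 0 < w n. Proof. exact: (good_n (inv_all n)).1. Qed.
Lemma w_le n : 4 * Bd * w n <= eps n. Proof. exact: (good_n (inv_all n)).2.1. Qed.
Lemma eps_half n : eps n.+1 <= eps n / 2. Proof. exact: (good_n (inv_all n)).2.2.2.1. Qed.

Lemma wtail N k : Bd * (Wsum (N + k) - Wsum N) + eps (N + k) / 2 <= eps N / 2.
Proof.
elim: k => [|k IH]; first by rewrite addn0 subrr mulr0 add0r.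
rewrite addnS W_rec.
have -> : Bd * (Wsum (N + k) + w (N + k) - Wsum N) =
  Bd * (Wsum (N + k) - Wsum N) + (4 * Bd * w (N + k)) / 4 by field.
have := w_le (N + k); have := eps_half (N + k).
move: IH; set X := Bd * _; set Y := 4 * Bd * _; lra.
Qed.

Lemma S_diff N k z : 0 <= S (N + k) z - S N z <= Bd * (Wsum (N + k) - Wsum N).
Proof.
elim: k => [|k IH]; first by rewrite addn0 !subrr mulr0 lexx.
rewrite addnS S_rec W_rec.
have a1 : 0 <= w (N + k) * F (N + k) z by rewrite mulr_ge0 ?F0 // ltW // w_pos.
have a2 : w (N + k) * F (N + k) z <= Bd * w (N + k).
  by rewrite mulrC ler_wpM2r ?FB // ltW // w_pos.
have -> : Bd * (Wsum (N + k) + w (N + k) - Wsum N) =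
  Bd * (Wsum (N + k) - Wsum N) + Bd * w (N + k) by ring.
case/andP: IH => i1 i2.
move: a1 a2 i1 i2; set X := Bd * (_ - _); set Y := Bd * w _; set Q := w _ * _.
move=> a1 a2 i1 i2; apply/andP; split.
  lra.
lra.
Qed.

Definition K0 := 1 / (2 * Bd).

Lemma W_le n : Wsum n <= K0.
Proof.
have := wtail 0 n; rewrite add0n W0 subr0 /eps /=.
have := eps_pos n; rewrite /eps => h1 h2.
rewrite /K0 ler_pdivlMr ?mulr_gt0 ?Bd0 //.
have -> : Wsum n * (2 * Bd) = 2 * (Bd * Wsum n) by ring.
by move: h1 h2; set X := Bd * _; set Y := (stt n).2; lra.
Qed.

Lemma S_hold n x y : S n x <= S n y + Wsum n * d x y `^ al.
Proof.
elim: n => [|n IH]; first by rewrite !S0 W0 mul0r addr0.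
rewrite !S_rec W_rec.
have h : w n * F n x <= w n * F n y + w n * d x y `^ al.
  rewrite -mulrDr; apply: ler_wpM2l; first exact: ltW (w_pos n).
  have := rho_hold (P n) x y; rewrite ler_norml /F => /andP[_ h]; lra.
rewrite mulrDl; lra.
Qed.

Lemma S_mono N M' z : (N <= M')%N -> S N z <= S M' z.
Proof.
move=> h; have := S_diff N (M' - N) z; rewrite subnKC // => /andP[h1 _]; lra.
Qed.

Definition u z := sup (range (fun n => S n z)).

Lemma u_ubd z : has_ubound (range (fun n => S n z)).
Proof.
exists (eps 0 / 2) => _ [n _ <-].
have := S_diff 0 n z; have := wtail 0 n; rewrite !add0n S0 subr0 => h1 /andP[_ h2].
have := eps_pos n; move: h1 h2; set X := Bd * _; lra.
Qed.

Lemma u_ge N z : S N z <= u z.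
Proof. by apply: (ub_le_sup (u_ubd z)); exists N. Qed.

Lemma u_le N z : u z <= S N z + eps N / 2.
Proof.
apply: ge_sup; first by exists (S 0 z), 0%N.
move=> _ [m _ <-].
have e0 := eps_pos N.
case: (leqP m N) => hm.
  have h1 : S m z <= S N z by exact: S_mono.
  by apply: le_trans h1 _; rewrite lerDl ltW // divr_gt0.
have hmN : (N + (m - N))%N = m by rewrite subnKC // ltnW.
have h1 := S_diff N (m - N) z; have h2 := wtail N (m - N); rewrite hmN in h1 h2.
have h3 := eps_pos m.
case/andP: h1 => _ h1.
have h4 : S m z - S N z <= eps N / 2 by apply: le_trans h1 _; apply: le_trans _ h2; rewrite lerDl ltW // divr_gt0.
by rewrite -lerBlDl.
Qed.

Lemma u_hold x y : u x <= u y + K0 * d x y `^ al.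
Proof.
apply: ge_sup; first by exists (S 0 x), 0%N.
move=> _ [n _ <-].
apply: le_trans (S_hold n x y) _.
apply: lerD; first exact: u_ge.
by rewrite ler_wpM2r ?powR_ge0 // W_le.
Qed.

Lemma u_holder : holder d al u.
Proof.
exists K0 => x y; have h1 := u_hold x y; have h2 := u_hold y x.
rewrite dsym in h2; rewrite ler_norml; apply/andP; split; lra.
Qed.

Lemma u_const C x y : Cc C -> C x -> C y -> u x = u y.
Proof.
move=> cC Cx Cy; rewrite /u.
have -> : (fun n => S n x) = (fun n => S n y).
  apply: funext => n; apply: eq_bigr => j _; rewrite /F (rho_const _ cC Cx Cy) //.
by [].
Qed.

Lemma u_sep0 k l : (k < l)%N -> sep k l -> u (P k) <> u (P l).
Proof.
move=> kl hs he.
have [e0 hI] := inv_all l.+1.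
have h := hI k l kl (ltnSn l) hs.
have := u_ge l.+1 (P k); have := u_le l.+1 (P k).
have := u_ge l.+1 (P l); have := u_le l.+1 (P l).
rewrite he => *.
have : `|S l.+1 (P k) - S l.+1 (P l)| <= eps l.+1 / 2.
  by rewrite ler_norml; apply/andP; split; lra.
lra.
Qed.

Lemma u_sep k l : sep k l -> u (P k) <> u (P l).
Proof.
move=> hs; case: (ltngtP k l) => kl.
- exact: u_sep0.
- move=> h; apply: (u_sep0 kl) => //.
  by case: hs => [ne nC]; split; [move=> h'; apply: ne|move=> [C [c [h1 h2]]]; apply: nC; exists C].
- by subst; case: hs.
Qed.

End Weights.

Lemma Cne C : Cc C -> exists c, C c.
Proof.
move=> cC; apply: contrapT => hn; have := (hC cC).2; rewrite /diam.
have -> : [set r | exists x y, C x /\ C y /\ r = d x y] = set0.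
  apply/seteqP; split => // r /= [x [_ [Cx _]]]; apply: hn; by exists x.
by rewrite sup0 ltxx.
Qed.

Lemma main_constr (P : nat -> Z) : exists u : Z -> R, holder d al u /\
  (forall C, Cc C -> exists c, forall z, C z -> u z = c) /\
  (forall k l, sep P k l -> u (P k) <> u (P l)).
Proof.
exists (u P); split; first exact: u_holder.
split; last exact: u_sep.
move=> C cC; have [c0 h0] := Cne cC.
by exists (u P c0) => z Cz; exact: u_const cC Cz h0.
Qed.

End Main.


Theorem theorem4p1 (R : realType) (alpha : R) :
  0 < alpha < 1 ->
  exists D : R, 1 <= D /\
    forall (Z : Type) (d : Z -> Z -> R),
      is_metric d -> bounded_metric d ->
      forall Cc : set (set Z),
        countable Cc ->
        (forall C, Cc C -> mclosed d C /\ 0 < diam d C) ->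
        (forall C1 C2, Cc C1 -> Cc C2 -> C1 <> C2 -> D <= reldist d C1 C2) ->
        forall z1 z2 : Z, z1 <> z2 ->
          (exists C, Cc C /\ C z1 /\ C z2) \/
          (exists u : Z -> R,
             holder d alpha u /\
             (forall C, Cc C -> exists c : R, forall z, C z -> u z = c) /\
             (forall C1 C2, Cc C1 -> Cc C2 -> u @` C1 = u @` C2 -> C1 = C2) /\
             u z1 <> u z2).
Proof.
move=> hal.
have al0 : 0 < alpha by case/andP: hal.
have al1 : alpha < 1 by case/andP: hal.
have oa : 0 < 1 - alpha by rewrite subr_gt0.
have hD1 : 1 <= (1 - alpha)^-1 by rewrite invf_ge1 // lerBlDr lerDl ltW.
exists (1 - alpha)^-1; split => //.
move=> Z d hd [M hM] Cc hcount hC hsep z1 z2 nz.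
have hDal : alpha * (1 + ((1 - alpha)^-1)^-1) <= 1 by rewrite invrK; nra.
have [[C [cC [C1 C2]]]|nC] := pselect (exists C, Cc C /\ C z1 /\ C z2).
  by left; exists C.
right.
have /countable_injP [f finj] := hcount.
pose rep (C : set Z) : Z :=
  if pselect (exists c, C c) is left h then proj1_sig (cid h) else z1.
pose chooseC (n : nat) : set Z :=
  if pselect (exists C, Cc C /\ f C = n) is left h then proj1_sig (cid h) else set0.
pose P (n : nat) : Z := if n is m.+2 then rep (chooseC m) else if n is 1%N then z2 else z1.
have hP C : Cc C -> C (P (f C).+2).
  move=> cC; rewrite /P /chooseC.
  case: pselect => [h|nh]; last by exfalso; apply: nh; exists C.
  case: (cid h) => C' [cC' fC'] /=.
  have eC : C' = C by apply: finj; rewrite ?inE //; apply/mem_set.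
  subst C'; rewrite /rep; case: pselect => [h'|nh'].
    by case: (cid h').
  by exfalso; have [c Cc'] := Cne hC cC; apply: nh'; exists c.
have [u [uh [uc us]]] := main_constr hal hd hM hC hD1 hDal hsep P.
exists u; split => //; split => //; split; last first.
  apply: (us 0%N 1%N); split => //.
move=> A B cA cB hAB; apply: contrapT => nAB.
have hA := hP A cA; have hB := hP B cB.
set a := P (f A).+2 in hA; set b := P (f B).+2 in hB.
have [c [Bc uc1]] : exists c, B c /\ u c = u a.
  have : (u @` A) (u a) by exists a.
  by rewrite hAB => -[c Bc e]; exists c.
have [ub hub] := uc B cB.
have uab : u a = u b by rewrite -uc1 (hub c Bc) (hub b hB).
apply: (us (f A).+2 (f B).+2) => //; split.
  by move=> e; apply: nAB; apply: (disj hd hC hD1 hsep cA cB hA); rewrite /a e.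
move=> [C [cC [Ca Cb]]].
have e1 := disj hd hC hD1 hsep cC cA Ca hA.
have e2 := disj hd hC hD1 hsep cC cB Cb hB.
by apply: nAB; rewrite -e1 -e2.
Qed.
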